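(* Let $\theta>1$, let $\eta^n\in\Omega_n$ be arbitrary deterministic configurations, $t\in[0,T]$ and $\lambda>0$. Then $$\limsup_{n\to\infty}\frac1n\log\mathbb P_{\delta_{\eta^n}}\big[\tfrac1nJ^n_{0,1}(t)>\lambda\big]=\limsup_{n\to\infty}\frac1n\log\mathbb P_{\delta_{\eta^n}}\big[\tfrac1nJ^n_{n-1,n}(t)>\lambda\big]=-\infty.$$
   Context: Model: $\Sigma_n=\{1,\dots,n-1\}$, $\Omega_n=\{0,1\}^{\Sigma_n}$, $\alpha,\beta\in(0,1)$, $r_1=\alpha,r_{n-1}=\beta$, $T>0$; $\mathbb P_{\delta_{\eta^n}}$ is the law of the Markov process on $[0,T]$ with generator $n^2\mathcal L_n$, $(\mathcal L_nf)(\eta)=\sum_{x=1}^{n-2}[f(\eta^{x,x+1})-f(\eta)]+n^{-\theta}\sum_{x\in\{1,n-1\}}[r_x(1-\eta(x))+(1-r_x)\eta(x)][f(\sigma^x\eta)-f(\eta)]$ ($\sigma^x\eta$ flips the value at $x$: creation of a particle if $\eta(x)=0$, removal if $\eta(x)=1$), started at $\eta^n$. $J^n_{0,1}(t)$ is the number of particles created at site $1$ minus the number of particles removed at site $1$ (via the boundary flips) during $[0,t]$; $J^n_{n-1,n}(t)$ is the number of particles removed at site $n-1$ minus the number created at site $n-1$ during $[0,t]$. *)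

(* Defs.v *)
From HB Require Import structures.
From mathcomp Require Import all_boot all_order all_algebra.
From mathcomp Require Import all_classical all_reals all_analysis.
Set Implicit Arguments. Unset Strict Implicit. Unset Printing Implicit Defensive.
Import Order.TTheory GRing.Theory Num.Theory.
Local Open Scope ring_scope.

(* Configurations: eta : nat -> bool; only the sites 1..n-1 (Sigma_n) are
   ever read or modified by the dynamics, so this is Omega_n up to the
   irrelevant values outside Sigma_n. *)
Definition config := nat -> bool.

Definition swap (eta : config) (x : nat) : config :=
  fun y => if y == x then eta x.+1 else if y == x.+1 then eta x else eta y.

Definition flip (eta : config) (x : nat) : config :=
  fun y => if y == x then ~~ eta x else eta y.

Definition b2R (R : realType) (b : bool) : R := if b then 1 else 0.

Definition brate (R : realType) (r : R) (eta : config) (x : nat) : R :=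
  r * (1 - b2R R (eta x)) + (1 - r) * b2R R (eta x).

(* Observables of the augmented Markov chain (eta_t, J_{0,1}(t), J_{n-1,n}(t))
   on Omega_n x Z x Z. *)
Definition obs (R : realType) := config -> int -> int -> R.

Definition gen (R : realType) (theta alpha beta : R) (n : nat) (f : obs R) : obs R :=
  fun eta a b =>
    (n%:R ^+ 2) *
    ( (\sum_(1 <= x < n.-1) (f (swap eta x) a b - f eta a b))
      + (n%:R `^ (- theta)) *
        ( brate alpha eta 1 *
            (f (flip eta 1) (if eta 1 then a - 1 else a + 1) b - f eta a b)
        + brate beta eta n.-1 *
            (f (flip eta n.-1) a (if eta n.-1 then b + 1 else b - 1) - f eta a b))).

Fixpoint gen_iter (R : realType) (theta alpha beta : R) (n k : nat) (f : obs R) : obs R :=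
  match k with
  | 0 => f
  | k'.+1 => gen theta alpha beta n (gen_iter theta alpha beta n k' f)
  end.

(* Markov semigroup  e^{t n^2 L}  of the (bounded-rate) augmented chain:
   (S_t f)(x) = sum_{k>=0} t^k/k! (Q^k f)(x). *)
Definition semigroup (R : realType) (theta alpha beta : R) (n : nat) (t : R) (f : obs R) : obs R :=
  fun eta a b =>
    limn (fun N => \sum_(0 <= k < N)
      (t ^+ k / (k`!)%:R * gen_iter theta alpha beta n k f eta a b)).

(* P_{delta_eta}[ J_{0,1}(t)/n > lambda ]  (both currents start at 0) *)
Definition prob_J01 (R : realType) (theta alpha beta : R) (n : nat) (eta : config) (t lambda : R) : R :=
  semigroup theta alpha beta n t
    (fun _ a _ => b2R R (lambda < a%:~R / n%:R)) eta 0 0.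

Definition prob_Jn (R : realType) (theta alpha beta : R) (n : nat) (eta : config) (t lambda : R) : R :=
  semigroup theta alpha beta n t
    (fun _ _ b => b2R R (lambda < b%:~R / n%:R)) eta 0 0.

(* Main.v *)
Require Import Defs.
From HB Require Import structures.
From mathcomp Require Import all_boot all_order all_algebra.
From mathcomp Require Import all_classical all_reals all_analysis.
From mathcomp.algebra_tactics Require Import ring lra.
Import Order.TTheory GRing.Theory Num.Theory.
Local Open Scope ring_scope.
Section Aux1.
Set Implicit Arguments. Unset Strict Implicit. Unset Printing Implicit Defensive.

Definition Pop (R : realType) (theta alpha beta : R) (n : nat) (h : obs R) : obs R :=
  fun eta a b => n%:R ^+ 2 * ( \sum_(1 <= x < n.-1) h (swap eta x) a b
     + n%:R `^ (- theta) * ( (2 - brate alpha eta 1 - brate beta eta n.-1) * h eta a b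
       + brate alpha eta 1 * h (flip eta 1) (if eta 1 then a - 1 else a + 1) b
       + brate beta eta n.-1 * h (flip eta n.-1) a (if eta n.-1 then b + 1 else b - 1))).

Definition Cn (R : realType) (theta : R) (n : nat) : R :=
  n%:R ^+ 2 * ((n.-1 - 1)%:R + 2 * n%:R `^ (- theta)).

Lemma genE (R : realType) (theta alpha beta : R) n h eta a b :
  gen theta alpha beta n h eta a b = Pop theta alpha beta n h eta a b - Cn theta n * h eta a b.
Proof.
rewrite /gen /Pop /Cn sumrB sumr_const_nat -mulr_natr; ring.
Qed.

Lemma Pop_lin (R : realType) (theta alpha beta : R) n (h1 h2 : obs R) c1 c2 eta a b :
  Pop theta alpha beta n (fun e a b => c1 * h1 e a b + c2 * h2 e a b) eta a b =
  c1 * Pop theta alpha beta n h1 eta a b + c2 * Pop theta alpha beta n h2 eta a b.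
Proof.
rewrite /Pop big_split /= -!mulr_sumr; ring.
Qed.

Lemma brate_ge0 (R : realType) (r : R) eta x : 0 <= r <= 1 -> 0 <= brate r eta x.
Proof. move=> /andP[h0 h1]; rewrite /brate /b2R; case: (eta x); lra. Qed.
Lemma brate_le1 (R : realType) (r : R) eta x : 0 <= r <= 1 -> brate r eta x <= 1.
Proof. move=> /andP[h0 h1]; rewrite /brate /b2R; case: (eta x); lra. Qed.

Lemma Pop_mono (R : realType) (theta alpha beta : R) n (h1 h2 : obs R) :
  0 <= alpha <= 1 -> 0 <= beta <= 1 ->
  (forall e a b, h1 e a b <= h2 e a b) ->
  forall e a b, Pop theta alpha beta n h1 e a b <= Pop theta alpha beta n h2 e a b.
Proof.
move=> ha hb H e a b; rewrite /Pop.
have p0 := @powR_ge0 R n%:R (- theta).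
have r1 := brate_ge0 e 1 ha; have r2 := brate_ge0 e n.-1 hb.
have r3 := brate_le1 e 1 ha; have r4 := brate_le1 e n.-1 hb.
apply: ler_wpM2l; first by rewrite exprn_ge0.
apply: lerD; first by apply: ler_sum => i _; apply: H.
apply: ler_wpM2l => //.
apply: lerD; first apply: lerD.
- by apply: ler_wpM2l; [lra|apply: H].
- by apply: ler_wpM2l => //; apply: H.
- by apply: ler_wpM2l => //; apply: H.
Qed.

Lemma Pop_cst (R : realType) (theta alpha beta : R) n c e a b :
  Pop theta alpha beta n (fun _ _ _ => c) e a b = Cn theta n * c.
Proof. rewrite /Pop /Cn sumr_const_nat -mulr_natr; ring. Qed.

Definition Piter (R : realType) (theta alpha beta : R) (n k : nat) (h : obs R) : obs R :=
  iter k (Pop theta alpha beta n) h.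

Lemma Pop_sum (R : realType) (theta alpha beta : R) n m (c : nat -> R) (H : nat -> obs R) e a b :
  Pop theta alpha beta n (fun e a b => \sum_(j < m) c j * H j e a b) e a b =
  \sum_(j < m) c j * Pop theta alpha beta n (H j) e a b.
Proof.
elim: m e a b => [|m IH] e a b.
  rewrite big_ord0.
  have -> : (fun e a b => \sum_(j < 0) c j * H j e a b) = (fun _ _ _ => 0 : R).
    by apply/funext => ?; apply/funext => ?; apply/funext => ?; rewrite big_ord0.
  by rewrite Pop_cst mulr0.
have -> : (fun e a b => \sum_(j < m.+1) c j * H j e a b) =
   (fun e a b => 1 * (\sum_(j < m) c j * H j e a b) + c m * H m e a b).
  by apply/funext => ?; apply/funext => ?; apply/funext => ?; rewrite big_ord_recr mul1r.
by rewrite Pop_lin big_ord_recr /= IH mul1r.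
Qed.

Lemma PiterS (R : realType) (theta alpha beta : R) n j f :
  Piter theta alpha beta n j.+1 f = Pop theta alpha beta n (Piter theta alpha beta n j f).
Proof. by []. Qed.

Lemma gen_iter_binom (R : realType) (theta alpha beta : R) n k f e a b :
  gen_iter theta alpha beta n k f e a b =
  \sum_(j < k.+1) ('C(k, j)%:R * (- Cn theta n) ^+ (k - j)) *
      Piter theta alpha beta n j f e a b.
Proof.
elim: k e a b => [|k IH] e a b.
  by rewrite big_ord1 /= bin0 expr0 !mul1r.
rewrite /= genE.
have -> : gen_iter theta alpha beta n k f = (fun e a b =>
   \sum_(j < k.+1) ('C(k, j)%:R * (- Cn theta n) ^+ (k - j)) *
      Piter theta alpha beta n j f e a b).
  by apply/funext => ?; apply/funext => ?; apply/funext => ?; rewrite IH.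
rewrite (@Pop_sum R theta alpha beta n k.+1 (fun j => 'C(k, j)%:R * (- Cn theta n) ^+ (k - j)) (fun j => Piter theta alpha beta n j f)).
set C := Cn theta n.
rewrite [RHS]big_ord_recl /= bin0 subn0.
under [X in _ = _ + X]eq_bigr => i _ do rewrite /bump /= add1n binS natrD mulrDl subSS mulrDl add0n.
rewrite big_split /=.
rewrite [X in _ = _ + X]addrC addrCA; congr (_ + _).
rewrite mulr_sumr -sumrN big_ord_recl /= bin0 subn0.
rewrite [X in _ = _ + X]big_ord_recr /= bin_small // mul0r mul0r addr0.
congr (_ + _); first by rewrite exprS; ring.
apply: eq_bigr => i _; rewrite /bump /= add1n.
have hi := ltn_ord i.
have -> : (k - i = (k - i.+1).+1)%N by rewrite subnSK.
rewrite exprS; ring.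
Qed.


End Aux1.
Section Aux2.
Import numFieldNormedType.Exports.
Set Implicit Arguments. Unset Strict Implicit. Unset Printing Implicit Defensive.
Local Open Scope classical_set_scope.

Lemma fact_neq0 (R : realType) j : (j`!%:R : R) != 0.
Proof. by rewrite pnatr_eq0 -lt0n fact_gt0. Qed.

Lemma xfact_le_expR (R : realType) (x : R) j : 0 <= x -> x ^+ j / j`!%:R <= expR x.
Proof.
case: j => [|j] hx.
  by rewrite expr0 fact0 divr1; have := expR_ge1Dx x; lra.
by have := expR_ge1Dxn j hx; lra.
Qed.

Lemma fact_geom (R : realType) (c : R) j : 0 <= c ->
  c ^+ j / j`!%:R <= expR (8 * c) * (8^-1) ^+ j.
Proof.
move=> hc.
have -> : c ^+ j / j`!%:R = (8 * c) ^+ j / j`!%:R * (8^-1) ^+ j.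
  rewrite exprMn exprVn; field; rewrite fact_neq0 /= expf_neq0 //.
apply: ler_wpM2r; first by rewrite exprn_ge0 // invr_ge0.
by apply: xfact_le_expR; lra.
Qed.

Lemma step1 (R : realType) (C t : R) (V : nat -> R) k :
  t ^+ k / k`!%:R * (\sum_(j < k.+1) ('C(k, j)%:R * (- C) ^+ (k - j)) * V j) =
  \sum_(j < k.+1) (t ^+ j / j`!%:R * V j) * ((- (C * t)) ^+ (k - j) / (k - j)`!%:R).
Proof.
rewrite mulr_sumr; apply: eq_bigr => j _.
have hj : (j <= k)%N by rewrite -ltnS.
have hb : ('C(k, j)%:R * (j`!%:R * (k - j)`!%:R) = k`!%:R :> R).
  by rewrite -natrM -natrM mulnA -mulnA bin_fact.
have hbin : ('C(k, j)%:R : R) = k`!%:R / (j`!%:R * (k - j)`!%:R).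
  by rewrite -hb mulfK // mulf_neq0 // fact_neq0.
rewrite hbin -{1}(subnKC hj) exprD -mulNr exprMn.
field.
by rewrite !fact_neq0.
Qed.

Lemma step2 (R : realType) (a b : nat -> R) N :
  \sum_(0 <= k < N) \sum_(j < k.+1) a j * b (k - j)%N = \sum_(j < N) a j * series b (N - j)%N.
Proof.
elim: N => [|N IH]; first by rewrite big_geq // big_ord0.
rewrite big_nat_recr //= IH.
rewrite [RHS](eq_bigr (fun j : 'I_N.+1 => a j * series b (N - j)%N + a j * b (N - j)%N)); last first.
  move=> j _; rewrite subSn; last by rewrite -ltnS.
  by rewrite seriesS mulrDr addrC.
rewrite big_split /= [X in _ = X + _]big_ord_recr /= subnn.
have -> : series b 0 = 0 by rewrite /series /= big_geq.
by rewrite mulr0 addr0.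
Qed.

Lemma diff_bound (R : realType) (a b : nat -> R) (r : R) N : 0 <= r ->
  (forall j, `|a j| <= r ^+ j / j`!%:R) -> (forall i, `|b i| <= r ^+ i / i`!%:R) ->
  `|\sum_(j < N) a j * series b (N - j)%N - series a N * series b N|
     <= expR (8 * r) ^+ 2 * (2^-1) ^+ N.
Proof.
move=> r0 ha hb.
set E := expR (8 * r).
have E0 : 0 <= E by apply: expR_ge0.
have i80 : 0 <= 8^-1 :> R by rewrite invr_ge0.
have hab : forall j i, (N <= j + i)%N -> `|a j| * `|b i| <= E ^+ 2 * (8^-1) ^+ N.
  move=> j i hji.
  apply: (le_trans (ler_pM (normr_ge0 _) (normr_ge0 _) (ha j) (hb i))).
  apply: (le_trans (ler_pM _ _ (fact_geom j r0) (fact_geom i r0))).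
  - by rewrite divr_ge0 ?exprn_ge0.
  - by rewrite divr_ge0 ?exprn_ge0.
  rewrite mulrACA -expr2 -exprD; apply: ler_wpM2l; first by rewrite exprn_ge0.
  by apply: ler_wiXn2l => //; lra.
have -> : series a N * series b N = \sum_(j < N) a j * series b N.
  by rewrite /series /= big_mkord mulr_suml.
rewrite -sumrB.
apply: le_trans (ler_norm_sum _ _ _) _.
apply: (@le_trans _ _ (\sum_(j < N) (E ^+ 2 * (8^-1) ^+ N) *+ N)).
  apply: ler_sum => j _.
  have -> : series b N = series b (N - j)%N + \sum_((N - j)%N <= i < N) b i.
    by rewrite /series /= -big_cat_nat // leq_subr.
  rewrite mulrDr opprD addrA subrr add0r normrN normrM.
  apply: (@le_trans _ _ (`|a j| * \sum_((N - j)%N <= i < N) `|b i|)).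
    by apply: ler_wpM2l => //; apply: ler_norm_sum.
  rewrite mulr_sumr.
  apply: (@le_trans _ _ (\sum_((N - j)%N <= i < N) E ^+ 2 * (8^-1) ^+ N)).
    apply: ler_sum_nat => i /andP[hi1 hi2]; apply: hab.
    by rewrite -(leq_add2l j) in hi1; rewrite (leq_trans _ hi1) // subnKC // ltnW.
  rewrite sumr_const_nat; apply: ler_wpMn2l; first by rewrite mulr_ge0 // exprn_ge0.
  by rewrite leq_subr.
rewrite sumr_const card_ord -mulrnA -[X in X <= _]mulr_natr -mulrA.
apply: ler_wpM2l; first by rewrite exprn_ge0.
have hN : (N * N <= 4 ^ N)%N.
  have h := ltn_expl N (isT : (1 < 2)%N).
  by rewrite (_ : 4 = 2 * 2)%N // expnMn leq_mul // ltnW.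
apply: (@le_trans _ _ ((8^-1) ^+ N * 4%:R ^+ N)).
  by apply: ler_wpM2l; [rewrite exprn_ge0|rewrite -natrX ler_nat].
by rewrite -exprMn; apply: lerXn2r; rewrite ?nnegrE; lra.
Qed.

Lemma cauchy_bound (R : realType) (C t G : R) (V W : nat -> R) :
  0 <= C -> 0 <= t ->
  (forall k, W k = \sum_(j < k.+1) ('C(k, j)%:R * (- C) ^+ (k - j)) * V j) ->
  (forall j, 0 <= V j <= C ^+ j) ->
  (forall N, series (fun j => t ^+ j / j`!%:R * V j) N <= G) ->
  limn (fun N => \sum_(0 <= k < N) (t ^+ k / (k`!)%:R * W k)) <= expR (- (C * t)) * G.
Proof.
move=> C0 t0 hW hV hG.
set a := fun j => t ^+ j / j`!%:R * V j.
set b := exp_coeff (- (C * t)).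
have hh : (fun N => \sum_(0 <= k < N) (t ^+ k / (k`!)%:R * W k)) =
          (fun N => \sum_(j < N) a j * series b (N - j)%N).
  apply/funext => N; rewrite -step2; apply: eq_bigr => k _.
  by rewrite hW step1.
have ha0 : forall j, 0 <= a j.
  move=> j; rewrite /a mulr_ge0 ?divr_ge0 ?exprn_ge0 //.
  by case/andP: (hV j).
have ha : forall j, `|a j| <= (C * t) ^+ j / j`!%:R.
  move=> j; rewrite ger0_norm // /a exprMn.
  have [v0 v1] := andP (hV j).
  rewrite [X in _ <= X](_ : _ = t ^+ j / j`!%:R * C ^+ j); last by ring.
  by apply: ler_wpM2l => //; rewrite divr_ge0 ?exprn_ge0.
have hb : forall i, `|b i| <= (C * t) ^+ i / i`!%:R.
  move=> i; rewrite /b /exp_coeff /= normrM normrX normrN normfV !ger0_norm //.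
  by rewrite mulr_ge0.
have Acvg : cvgn (series a).
  apply: nondecreasing_is_cvgn.
    by apply: nondecreasing_series => n _ _; apply: ha0.
  by exists G => _ [n _ <-]; apply: hG.
have Bcvg : series b @ \oo --> expR (- (C * t)) := is_cvg_series_exp_coeff _.
set K := expR (8 * (C * t)) ^+ 2.
have Dcvg : (fun N => \sum_(j < N) a j * series b (N - j)%N - series a N * series b N)
              @ \oo --> (0 : R).
  apply: (@squeeze_cvgr _ _ _ _ (fun N => - (K * (2^-1) ^+ N)) (fun N => K * (2^-1) ^+ N)).
  - apply: nearW => N; rewrite -ler_norml; apply: diff_bound => //.
    by rewrite mulr_ge0.
  - rewrite -oppr0 -(mulr0 K); apply: cvgN; apply: cvgMr.
    by apply: cvg_expr; rewrite ger0_norm; lra.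
  - rewrite -(mulr0 K); apply: cvgMr.
    by apply: cvg_expr; rewrite ger0_norm; lra.
have Hlim : (fun N => \sum_(0 <= k < N) (t ^+ k / (k`!)%:R * W k)) @ \oo -->
              0 + limn (series a) * expR (- (C * t)).
  rewrite hh.
  have -> : (fun N => \sum_(j < N) a j * series b (N - j)%N) =
     (fun N => (\sum_(j < N) a j * series b (N - j)%N - series a N * series b N)
               + series a N * series b N).
    by apply/funext => N; rewrite subrK.
  by apply: cvgD => //; apply: cvgM.
rewrite (cvg_lim _ Hlim) // add0r mulrC.
apply: ler_wpM2l; first exact: expR_ge0.
by apply: limr_le => //; apply: nearW => N; apply: hG.
Qed.

Lemma Pop_scale (R : realType) (theta alpha beta : R) n c (h : obs R) e a b :
  Pop theta alpha beta n (fun e a b => c * h e a b) e a b = c * Pop theta alpha beta n h e a b.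
Proof. rewrite /Pop -!mulr_sumr; ring. Qed.

Lemma Cn_ge0 (R : realType) (theta : R) n : 0 <= Cn theta n.
Proof.
rewrite /Cn mulr_ge0 ?exprn_ge0 // addr_ge0 // mulr_ge0 //; exact: powR_ge0.
Qed.

Lemma Piter_mono (R : realType) (theta alpha beta : R) n j (h1 h2 : obs R) :
  0 <= alpha <= 1 -> 0 <= beta <= 1 ->
  (forall e a b, h1 e a b <= h2 e a b) ->
  forall e a b, Piter theta alpha beta n j h1 e a b <= Piter theta alpha beta n j h2 e a b.
Proof.
move=> ha hb H; elim: j => [|j IH] e a b; first exact: H.
by rewrite !PiterS; apply: Pop_mono.
Qed.

Lemma Piter_cst (R : realType) (theta alpha beta : R) n j c e a b :
  Piter theta alpha beta n j (fun _ _ _ => c) e a b = Cn theta n ^+ j * c.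
Proof.
elim: j e a b => [|j IH] e a b; first by rewrite /= mul1r.
rewrite PiterS.
have -> : Piter theta alpha beta n j (fun _ _ _ => c) = (fun _ _ _ => Cn theta n ^+ j * c).
  by apply/funext => ?; apply/funext => ?; apply/funext => ?; rewrite IH.
by rewrite Pop_cst exprS mulrA.
Qed.

Lemma Piter_geom (R : realType) (theta alpha beta : R) n j (g : obs R) L :
  0 <= alpha <= 1 -> 0 <= beta <= 1 -> 0 <= L ->
  (forall e a b, Pop theta alpha beta n g e a b <= L * g e a b) ->
  forall e a b, Piter theta alpha beta n j g e a b <= L ^+ j * g e a b.
Proof.
move=> ha hb L0 H; elim: j => [|j IH] e a b; first by rewrite /= mul1r.
rewrite PiterS.
apply: (@le_trans _ _ (Pop theta alpha beta n (fun e a b => L ^+ j * g e a b) e a b)).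
  by apply: Pop_mono.
rewrite Pop_scale exprSr -mulrA; apply: ler_wpM2l; first by rewrite exprn_ge0.
exact: H.
Qed.

Lemma series_exp_le (R : realType) (x : R) N : 0 <= x -> series (exp_coeff x) N <= expR x.
Proof.
move=> x0; apply: nondecreasing_cvgn_le; last exact: is_cvg_series_exp_coeff.
by apply: nondecreasing_series => k _ _; apply: exp_coeff_ge0.
Qed.

Lemma semigroup_bound (R : realType) (theta alpha beta : R) n t (f g : obs R) L e a b :
  0 <= alpha <= 1 -> 0 <= beta <= 1 -> 0 <= t -> 0 <= L ->
  (forall e a b, 0 <= f e a b <= 1) ->
  (forall e a b, f e a b <= g e a b) ->
  (forall e a b, 0 <= g e a b) ->
  (forall e a b, Pop theta alpha beta n g e a b <= L * g e a b) ->
  semigroup theta alpha beta n t f e a b <= expR (- (Cn theta n * t)) * (expR (t * L) * g e a b).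
Proof.
move=> ha hb t0 L0 hf hfg hg hP.
rewrite /semigroup.
apply: (@cauchy_bound R (Cn theta n) t _ (fun j => Piter theta alpha beta n j f e a b)
          (fun k => gen_iter theta alpha beta n k f e a b)).
- exact: Cn_ge0.
- exact: t0.
- by move=> k; rewrite gen_iter_binom.
- move=> j; apply/andP; split.
    rewrite -(mulr0 (Cn theta n ^+ j)) -(Piter_cst theta alpha beta n j 0 e a b).
    by apply: Piter_mono => // e0 a0 b0; case/andP: (hf e0 a0 b0).
  rewrite -(mulr1 (Cn theta n ^+ j)) -(Piter_cst theta alpha beta n j 1 e a b).
  by apply: Piter_mono => // e0 a0 b0; case/andP: (hf e0 a0 b0).
- move=> N.
  apply: (@le_trans _ _ (series (exp_coeff (t * L)) N * g e a b)); last first.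
    by apply: ler_wpM2r => //; apply: series_exp_le; rewrite mulr_ge0.
  rewrite /series /= mulr_suml; apply: ler_sum_nat => k _.
  rewrite /exp_coeff /= exprMn.
  rewrite [X in _ <= X](_ : _ = t ^+ k / k`!%:R * (L ^+ k * g e a b)); last by ring.
  apply: ler_wpM2l; first by rewrite divr_ge0 ?exprn_ge0.
  apply: (@le_trans _ _ (Piter theta alpha beta n k g e a b)).
    exact: Piter_mono.
  exact: Piter_geom.
Qed.

Definition gA (R : realType) (gam lam : R) (n : nat) : obs R :=
  fun _ a _ => expR (gam * (a%:~R - lam * n%:R)).
Definition gB (R : realType) (gam lam : R) (n : nat) : obs R :=
  fun _ _ b => expR (gam * (b%:~R - lam * n%:R)).
Definition Lc (R : realType) (theta gam : R) (n : nat) : R :=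
  Cn theta n + n%:R ^+ 2 * n%:R `^ (- theta) * (expR gam - 1).

Lemma shift_le (R : realType) (gam lam : R) n (a : int) (s : bool) : 0 <= gam ->
  expR (gam * ((if s then a - 1 else a + 1)%:~R - lam * n%:R))
    <= expR gam * expR (gam * (a%:~R - lam * n%:R)).
Proof.
move=> g0; have E1 : 1 <= expR gam by have := expR_ge1Dx gam; lra.
case: s.
- rewrite intrB.
  apply: (@le_trans _ _ (expR (gam * (a%:~R - lam * n%:R)))).
    by rewrite ler_expR; apply: ler_wpM2l => //; lra.
  by apply: ler_peMl => //; apply: expR_ge0.
- by rewrite intrD -expRD; rewrite ler_expR; lra.
Qed.

Lemma key_ineq (R : realType) (r1 r2 G X E : R) :
  0 <= r1 <= 1 -> 0 <= G -> 1 <= E -> X <= E * G ->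
  (2 - r1 - r2) * G + r1 * X + r2 * G <= (2 + (E - 1)) * G.
Proof.
move=> /andP[r10 r11] G0 E1 hX.
have h1 : 0 <= r1 * (E * G - X) by rewrite mulr_ge0 //; lra.
have h2 : 0 <= (1 - r1) * ((E - 1) * G) by rewrite !mulr_ge0 //; lra.
nra.
Qed.

Lemma Pop_gA (R : realType) (theta alpha beta gam lam : R) n e a b :
  0 <= alpha <= 1 -> 0 <= beta <= 1 -> 0 <= gam ->
  Pop theta alpha beta n (gA gam lam n) e a b <= Lc theta gam n * gA gam lam n e a b.
Proof.
move=> ha hb g0.
rewrite /Pop /gA /=.
set G := expR (gam * (a%:~R - lam * n%:R)).
set p := n%:R `^ (- theta).
have p0 : 0 <= p by apply: powR_ge0.
have E1 : 1 <= expR gam by have := expR_ge1Dx gam; lra.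
rewrite sumr_const_nat -[G *+ _]mulr_natr.
apply: (@le_trans _ _ (n%:R ^+ 2 * (G * (n.-1 - 1)%:R + p * ((2 + (expR gam - 1)) * G)))).
  apply: ler_wpM2l; first by rewrite exprn_ge0.
  rewrite lerD2l; apply: ler_wpM2l => //.
  apply: key_ineq.
  - by apply/andP; split; [exact: brate_ge0|exact: brate_le1].
  - exact: expR_ge0.
  - exact: E1.
  - exact: shift_le.
rewrite /Lc /Cn -/p; rewrite le_eqVlt; apply/orP; left; apply/eqP; ring.
Qed.

Lemma Pop_gB (R : realType) (theta alpha beta gam lam : R) n e a b :
  0 <= alpha <= 1 -> 0 <= beta <= 1 -> 0 <= gam ->
  Pop theta alpha beta n (gB gam lam n) e a b <= Lc theta gam n * gB gam lam n e a b.
Proof.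
move=> ha hb g0.
rewrite /Pop /gB /=.
set G := expR (gam * (b%:~R - lam * n%:R)).
set p := n%:R `^ (- theta).
have p0 : 0 <= p by apply: powR_ge0.
have E1 : 1 <= expR gam by have := expR_ge1Dx gam; lra.
rewrite sumr_const_nat -[G *+ _]mulr_natr.
apply: (@le_trans _ _ (n%:R ^+ 2 * (G * (n.-1 - 1)%:R + p * ((2 + (expR gam - 1)) * G)))).
  apply: ler_wpM2l; first by rewrite exprn_ge0.
  rewrite lerD2l; apply: ler_wpM2l => //.
  have -> : forall (r1 r2 X : R), (2 - r1 - r2) * G + r1 * G + r2 * X =
      (2 - r2 - r1) * G + r2 * X + r1 * G by move=> *; ring.
  apply: key_ineq.
  - by apply/andP; split; [exact: brate_ge0|exact: brate_le1].
  - exact: expR_ge0.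
  - exact: E1.
  - have := shift_le lam n b (~~ e n.-1) g0; case: (e n.-1) => //=.
rewrite /Lc /Cn -/p; rewrite le_eqVlt; apply/orP; left; apply/eqP; ring.
Qed.

Lemma expR_ge1 (R : realType) (x : R) : 0 <= x -> 1 <= expR x.
Proof. by move=> x0; have := expR_ge1Dx x; lra. Qed.

Lemma fA_le (R : realType) (gam lam : R) n (a : int) : (0 < n)%N -> 0 <= gam ->
  b2R R (lam < a%:~R / n%:R) <= expR (gam * (a%:~R - lam * n%:R)).
Proof.
move=> hn g0; rewrite /b2R; case: ifPn => [h|_]; last exact: expR_ge0.
rewrite ltr_pdivlMr ?ltr0n // in h.
by apply: expR_ge1; apply: mulr_ge0 => //; lra.
Qed.

Lemma b2R_01 (R : realType) (c : bool) : 0 <= b2R R c <= 1.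
Proof. by rewrite /b2R; case: c; apply/andP; split. Qed.

Lemma Lc_ge0 (R : realType) (theta gam : R) n : 0 <= gam -> 0 <= Lc theta gam n.
Proof.
move=> g0; rewrite /Lc addr_ge0 ?Cn_ge0 // !mulr_ge0 ?exprn_ge0 ?powR_ge0 //.
by have := expR_ge1 g0; lra.
Qed.

Lemma final_eq (R : realType) (theta gam lam t : R) n :
  expR (- (Cn theta n * t)) * (expR (t * Lc theta gam n) * expR (gam * ((0:int)%:~R - lam * n%:R)))
  = expR (t * (n%:R ^+ 2 * n%:R `^ (- theta) * (expR gam - 1)) - gam * lam * n%:R).
Proof.
rewrite -!expRD; congr expR; rewrite /Lc (_ : (0:int)%:~R = 0 :> R) //; ring.
Qed.

Lemma prob_bound_A (R : realType) (theta alpha beta gam lam t : R) n eta :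
  0 <= alpha <= 1 -> 0 <= beta <= 1 -> (0 < n)%N -> 0 <= t -> 0 <= gam ->
  prob_J01 theta alpha beta n eta t lam <=
  expR (t * (n%:R ^+ 2 * n%:R `^ (- theta) * (expR gam - 1)) - gam * lam * n%:R).
Proof.
move=> ha hb hn t0 g0; rewrite /prob_J01 -final_eq.
apply: (@semigroup_bound R theta alpha beta n t _ (gA gam lam n)) => //.
- exact: Lc_ge0.
- by move=> *; apply: b2R_01.
- by move=> e a b; apply: fA_le.
- by move=> *; apply: expR_ge0.
- by move=> e a b; apply: Pop_gA.
Qed.

Lemma prob_bound_B (R : realType) (theta alpha beta gam lam t : R) n eta :
  0 <= alpha <= 1 -> 0 <= beta <= 1 -> (0 < n)%N -> 0 <= t -> 0 <= gam ->
  prob_Jn theta alpha beta n eta t lam <=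
  expR (t * (n%:R ^+ 2 * n%:R `^ (- theta) * (expR gam - 1)) - gam * lam * n%:R).
Proof.
move=> ha hb hn t0 g0; rewrite /prob_Jn -final_eq.
apply: (@semigroup_bound R theta alpha beta n t _ (gB gam lam n)) => //.
- exact: Lc_ge0.
- by move=> *; apply: b2R_01.
- by move=> e a b; apply: fA_le.
- by move=> *; apply: expR_ge0.
- by move=> e a b; apply: Pop_gB.
Qed.

Lemma small_pow (R : realType) (theta eps : R) : 1 < theta -> 0 < eps ->
  exists N0, forall n, (N0 <= n)%N -> (0 < n)%N /\ n%:R * n%:R `^ (- theta) <= eps.
Proof.
move=> ht he.
set M := (eps^-1) `^ ((theta - 1)^-1).
exists (Num.truncn M).+1; move=> n hn; split; first exact: (leq_trans (ltn0Sn _) hn).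
have Mn : M < n%:R by apply: (lt_le_trans (truncnS_gt M)); rewrite ler_nat.
have M0 : 0 <= M by apply: powR_ge0.
have npos : 0 < n%:R :> R by apply: le_lt_trans Mn.
have t1 : 0 < theta - 1 by lra.
have -> : n%:R * n%:R `^ (- theta) = (n%:R `^ (theta - 1))^-1.
  rewrite powRN -(mulr_powRB1 (ltW npos) (lt_trans ltr01 ht)) invfM mulrA mulfV ?mul1r //.
  exact: lt0r_neq0.
have hpos : 0 < n%:R `^ (theta - 1) :> R by apply: powR_gt0.
rewrite invf_ple ?posrE //.
have -> : eps^-1 = M `^ (theta - 1).
  rewrite /M -powRrM mulVf ?powRr1 //; first by rewrite invr_ge0 ltW.
  exact: lt0r_neq0.
apply: ge0_ler_powR.
- exact: ltW.
- by rewrite nnegrE.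
- by rewrite nnegrE ltW.
- exact: ltW.
Qed.

Lemma lne_bound (R : realType) n (p z : R) : (0 < n)%N -> p <= expR z ->
  (((n%:R)^-1)%:E * lne p%:E <= ((n%:R)^-1 * z)%R%:E)%E.
Proof.
move=> hn hp; case: (leP p 0) => p0.
  rewrite le0_lneNy ?lee_fin // mulrNy gtr0_sg ?invr_gt0 ?ltr0n // mul1e.
  exact: leNye.
rewrite lne_EFin // -EFinM lee_fin ler_wpM2l ?invr_ge0 ?ler0n //.
by rewrite -[z]expRK ler_ln ?posrE ?expR_gt0.
Qed.

Lemma conclude (R : realType) (u : nat -> \bar R) (lam : R) : 0 < lam ->
  (forall gam, 0 < gam -> exists N0, forall n, (N0 <= n)%N -> (u n <= (- (gam * lam / 2))%:E)%E) ->
  limn_esup u = -oo%E.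
Proof.
move=> l0 H.
have Hle : forall gam, 0 < gam -> (limn_esup u <= (- (gam * lam / 2))%:E)%E.
  move=> gam g0; have [N0 HN] := H gam g0.
  rewrite limn_esup_lim; apply: lime_le; first exact: is_cvg_esups.
  exists N0 => // n /= hn; apply: ge_ereal_sup => _ [k /= nk <-].
  by apply: HN; apply: leq_trans hn nk.
case E: (limn_esup u) => [r| |] //.
- have g0 : 0 < 2 * (`|r| + 1) / lam by rewrite divr_gt0 // mulr_gt0 // ltr_pwDr.
  have := Hle _ g0; rewrite E lee_fin.
  have -> : 2 * (`|r| + 1) / lam * lam / 2 = `|r| + 1.
    by field; apply: lt0r_neq0.
  move=> hr; exfalso; have h1 := ler_norm (- r); rewrite normrN in h1; lra.
- by have := Hle 1 ltr01; rewrite E leye_eq.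
Qed.

End Aux2.

Lemma tail_bound (R : realType) (theta gam lam t : R) (P : nat -> R) :
  1 < theta -> 0 < lam -> 0 <= t -> 0 < gam ->
  (forall n, (0 < n)%N -> P n <= expR (t * (n%:R ^+ 2 * n%:R `^ (- theta) * (expR gam - 1)) - gam * lam * n%:R)) ->
  exists N0, forall n, (N0 <= n)%N ->
    (((n%:R)^-1)%:E * lne (P n)%:E <= (- (gam * lam / 2))%:E)%E.
Proof.
move=> ht hl t0 g0 HP.
set c := t * (expR gam - 1).
have c0 : 0 <= c by rewrite /c mulr_ge0 //; have := expR_ge1Dx gam; lra.
have e0 : 0 < gam * lam / (2 * (c + 1)) by rewrite divr_gt0 ?mulr_gt0 //; lra.
have [N0 HN] := small_pow ht e0.
exists N0 => n hn; have [n0 hq] := HN n hn.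
apply: (le_trans (lne_bound n0 (HP n n0))).
rewrite lee_fin.
have npos : (n%:R : R) != 0 by rewrite pnatr_eq0 -lt0n.
have -> : (n%:R)^-1 * (t * (n%:R ^+ 2 * n%:R `^ (- theta) * (expR gam - 1)) - gam * lam * n%:R)
    = c * (n%:R * n%:R `^ (- theta)) - gam * lam.
  by rewrite /c; field.
have h1 : c * (n%:R * n%:R `^ (- theta)) <= c * (gam * lam / (2 * (c + 1))).
  by apply: ler_wpM2l.
have h2 : c * (gam * lam / (2 * (c + 1))) <= gam * lam / 2.
  rewrite mulrA ler_pdivrMr; last by lra.
  have gl : 0 <= gam * lam by rewrite mulr_ge0 //; lra.
  rewrite [X in _ <= X](_ : _ = gam * lam * (c + 1)); last by field.
  nra.
lra.
Qed.

Theorem mainTheorem9 (R : realType) (alpha beta theta T t lambda : R)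
  (etan : nat -> config)
  (halpha : 0 < alpha < 1) (hbeta : 0 < beta < 1) (htheta : 1 < theta)
  (hT : 0 < T) (ht : 0 <= t <= T) (hlambda : 0 < lambda) :
  limn_esup (fun n : nat =>
      ((n%:R)^-1)%:E * lne (prob_J01 theta alpha beta n (etan n) t lambda)%:E)%E
    = -oo%E
  /\
  limn_esup (fun n : nat =>
      ((n%:R)^-1)%:E * lne (prob_Jn theta alpha beta n (etan n) t lambda)%:E)%E
    = -oo%E.
Proof.
have ha : 0 <= alpha <= 1 by case/andP: halpha => *; apply/andP; split; lra.
have hb : 0 <= beta <= 1 by case/andP: hbeta => *; apply/andP; split; lra.
have t0 : 0 <= t by case/andP: ht.
split; apply: (conclude hlambda) => gam g0; apply: (@tail_bound R theta gam lambda t) => // n n0.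
- by apply: prob_bound_A => //; apply: ltW.
- by apply: prob_bound_B => //; apply: ltW.
Qed.
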